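(* Let $p\in(1,\infty)$, $q=p/(p-1)$, $R_0\in\mathbb{R}^{\mathcal{S}\times\mathcal{A}}$, $\alpha>0$ and $\mathcal{R}_p=\{R:\|R-R_0\|_p\le\alpha\}$. Fix a stationary policy $\pi\in\Pi$ and define the operator on $\mathbb{R}^{\mathcal{S}}$ $$[\mathcal{T}^{\pi,\mathrm{reg}}_{\mathcal{R}_p}v](s)=(\mathcal{T}^\pi_{R_0}v)(s)-\alpha\,\frac{\sum_a\pi_s(a)\,d^\pi(s,a)^{q-1}}{\|d^\pi\|_q^{q-1}},\qquad s\in\mathcal{S}.$$ Then for any $v_0\in\mathbb{R}^{\mathcal{S}}$ the sequence $v_{n+1}=\mathcal{T}^{\pi,\mathrm{reg}}_{\mathcal{R}_p}v_n$ converges linearly to the robust value function $v^\pi_{\mathcal{R}_p}$.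
   Context: Finite MDP with finite state space $\mathcal{S}$, finite action space $\mathcal{A}$, transition kernel $P$, discount $\gamma\in[0,1)$, initial distribution $\mu$ with $\mu(s)>0$ for all $s$. $\Pi$: stationary randomized policies, $\pi_s(a)=\pi(a|s)$; $R^\pi(s)=\sum_a\pi_s(a)R(s,a)$, $P^\pi(s'|s)=\sum_a\pi_s(a)P(s'|s,a)$; $(\mathcal{T}^\pi_Rv)(s)=R^\pi(s)+\gamma\sum_{s'}P^\pi(s'|s)v(s')$; $v^\pi_R=(I-\gamma P^\pi)^{-1}R^\pi$. Occupancy: $d^\pi=\mu^\top(I-\gamma P^\pi)^{-1}$, $d^\pi(s,a)=d^\pi(s)\pi_s(a)$, $\|d^\pi\|_q$ the $L_q$ norm over $\mathcal{S}\times\mathcal{A}$. Return $\rho^\pi_R=\sum_{s,a}d^\pi(s,a)R(s,a)$. The worst-case reward $R^\pi_p$ is the (unique) minimizer of $R\mapsto\rho^\pi_R$ over $\mathcal{R}_p$, and the robust value function is $v^\pi_{\mathcal{R}_p}:=v^\pi_{R^\pi_p}$. *)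

(* Defs.v *)
From HB Require Import structures.
From mathcomp Require Import all_boot all_order all_algebra.
From mathcomp Require Import reals exp.
Set Implicit Arguments. Unset Strict Implicit. Unset Printing Implicit Defensive.
Import Order.TTheory GRing.Theory Num.Theory.
Local Open Scope ring_scope.

Section MDP.
Variables (R : realType) (nS nA : nat).

(* pi s a = pi(a|s) ; P s a s' = P(s'|s,a) ; rewards are 'M_(nS,nA) *)
Definition is_policy (pi : 'M[R]_(nS, nA)) : Prop :=
  (forall s a, 0 <= pi s a) /\ (forall s, \sum_a pi s a = 1).

Definition is_kernel (P : 'I_nS -> 'I_nA -> 'I_nS -> R) : Prop :=
  (forall s a s', 0 <= P s a s') /\ (forall s a, \sum_s' P s a s' = 1).

Definition is_init_dist (mu : 'rV[R]_nS) : Prop :=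
  (forall s, 0 < mu 0 s) /\ \sum_s mu 0 s = 1.

Definition Ppi (P : 'I_nS -> 'I_nA -> 'I_nS -> R) (pi : 'M[R]_(nS, nA))
  : 'M[R]_nS := \matrix_(s, s') \sum_a pi s a * P s a s'.

Definition Rpi (pi Rw : 'M[R]_(nS, nA)) : 'cV[R]_nS :=
  \col_s \sum_a pi s a * Rw s a.

Definition bellman (gamma : R) P pi Rw (v : 'cV[R]_nS) : 'cV[R]_nS :=
  Rpi pi Rw + gamma *: (Ppi P pi *m v).

Definition value (gamma : R) P pi Rw : 'cV[R]_nS :=
  invmx (1%:M - gamma *: Ppi P pi) *m Rpi pi Rw.

Definition occS (gamma : R) P (mu : 'rV[R]_nS) pi : 'rV[R]_nS :=
  mu *m invmx (1%:M - gamma *: Ppi P pi).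

Definition occ (gamma : R) P mu pi : 'M[R]_(nS, nA) :=
  \matrix_(s, a) (occS gamma P mu pi 0 s * pi s a).

Definition Lnorm (r : R) (M : 'M[R]_(nS, nA)) : R :=
  powR (\sum_s \sum_a powR `|M s a| r) (r^-1).

Definition ret (gamma : R) P mu pi (Rw : 'M[R]_(nS, nA)) : R :=
  \sum_s \sum_a occ gamma P mu pi s a * Rw s a.

Definition in_ball (p alpha : R) (R0 Rw : 'M[R]_(nS, nA)) : Prop :=
  Lnorm p (Rw - R0) <= alpha.

Definition worst_reward (gamma : R) P mu pi (p alpha : R) R0 Rw : Prop :=
  in_ball p alpha R0 Rw /\
  forall R', in_ball p alpha R0 R' -> ret gamma P mu pi Rw <= ret gamma P mu pi R'.

Definition Treg (gamma : R) P mu pi (p alpha : R) R0 (v : 'cV[R]_nS)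
  : 'cV[R]_nS :=
  let q := p / (p - 1) in
  let d := occ gamma P mu pi in
  bellman gamma P pi R0 v -
  \col_s (alpha * (\sum_a pi s a * powR (d s a) (q - 1))
                  / powR (Lnorm q d) (q - 1)).

Definition converges_linearly (u : nat -> 'cV[R]_nS) (l : 'cV[R]_nS) : Prop :=
  exists C : R, exists r : R, 0 <= C /\ 0 <= r < 1 /\
    forall n s, `|u n s 0 - l s 0| <= C * r ^+ n.

End MDP.

(* Main.v *)
Require Import Defs.
From mathcomp Require Import all_boot all_order all_algebra.
From mathcomp Require Import reals exp.
From mathcomp Require Import sequences.
From mathcomp Require Import ring lra.
Import Order.TTheory GRing.Theory Num.Theory.
Local Open Scope ring_scope.

Module Helpers.
Set Implicit Arguments. Unset Strict Implicit.


Section Mat.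
Variables (R : realType) (nS nA : nat).
Variables (P : 'I_nS -> 'I_nA -> 'I_nS -> R) (pi : 'M[R]_(nS, nA)) (gamma : R).
Hypothesis hP : is_kernel P.
Hypothesis hpi : is_policy pi.
Hypothesis hg : 0 <= gamma < 1.

Lemma Ppi_ge0 s s' : 0 <= Ppi P pi s s'.
Proof.
rewrite mxE; apply: sumr_ge0 => a _; apply: mulr_ge0; [exact: (proj1 hpi) | exact: (proj1 hP)].
Qed.

Lemma Ppi_row s : \sum_s' Ppi P pi s s' = 1.
Proof.
under eq_bigr do rewrite mxE.
rewrite exchange_big /= -((proj2 hpi) s); apply: eq_bigr => a _.
by rewrite -mulr_sumr (proj2 hP) mulr1.
Qed.

Definition Mm := 1%:M - gamma *: Ppi P pi.

Lemma rowfix (x : 'rV[R]_nS) : x = gamma *: (x *m Ppi P pi) -> x = 0.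
Proof.
move=> hx.
have hj : forall j, `|x 0 j| <= gamma * \sum_i `|x 0 i| * Ppi P pi i j.
  move=> j; rewrite {1}hx mxE mxE normrM ger0_norm; last by case/andP: hg.
  apply: ler_wpM2l; first by case/andP: hg.
  apply: (le_trans (ler_norm_sum _ _ _)); apply: ler_sum => i _.
  by rewrite normrM (ger0_norm (Ppi_ge0 _ _)).
have hS : \sum_j `|x 0 j| <= gamma * \sum_i `|x 0 i|.
  apply: (le_trans (ler_sum _ (fun j _ => hj j))).
  rewrite -mulr_sumr exchange_big /=; apply: ler_wpM2l; first by case/andP: hg.
  apply: ler_sum => i _; by rewrite -mulr_sumr Ppi_row mulr1.
have S0 : \sum_j `|x 0 j| = 0.
  apply/eqP; rewrite eq_le sumr_ge0 // andbT.
  have : (1 - gamma) * \sum_j `|x 0 j| <= 0 by rewrite mulrBl mul1r subr_le0.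
  rewrite pmulr_rle0 // subr_gt0; by case/andP: hg.
apply/rowP => j; rewrite mxE; apply/normr0_eq0.
by apply: (psumr_eq0P (fun i _ => normr_ge0 (x 0 i)) S0).
Qed.

Lemma Mm_unit : Mm \in unitmx.
Proof.
rewrite -row_free_unit -kermx_eq0; apply/eqP/row_matrixP => i.
rewrite row0; apply: rowfix.
have := congr1 (row i) (mulmx_ker Mm).
rewrite row_mul row0 /Mm mulmxBr mulmx1 -scalemxAr => /eqP.
by rewrite subr_eq0 => /eqP.
Qed.

End Mat.

Section Occ.
Variables (R : realType) (nS nA : nat).
Variables (P : 'I_nS -> 'I_nA -> 'I_nS -> R) (pi : 'M[R]_(nS, nA)) (gamma : R).
Variable (mu : 'rV[R]_nS).
Hypothesis hP : is_kernel P.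
Hypothesis hpi : is_policy pi.
Hypothesis hg : 0 <= gamma < 1.
Hypothesis hmu : is_init_dist mu.

Lemma occS_eq : occS gamma P mu pi = mu + gamma *: (occS gamma P mu pi *m Ppi P pi).
Proof.
have := mulmxKV (Mm_unit hP hpi hg) mu.
rewrite /occS => {2}<-; set d := mu *m _.
by rewrite /Mm mulmxBr mulmx1 -scalemxAr subrK.
Qed.

Lemma occS_ge0 j : 0 <= occS gamma P mu pi 0 j.
Proof.
have E := occS_eq.
set d := occS gamma P mu pi in E *; clearbody d.
have g0 : 0 <= gamma by case/andP: hg.
pose n j := (`|d 0 j| - d 0 j) / 2.
have n0 : forall j, 0 <= n j.
  by move=> k; rewrite /n divr_ge0 // subr_ge0 ler_norm.
have hj : forall j, n j <= gamma * \sum_i n i * Ppi P pi i j.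
  move=> k; have [dk|dk] := leP 0 (d 0 k).
    rewrite /n ger0_norm // subrr mul0r; apply: mulr_ge0 => //.
    by apply: sumr_ge0 => i _; apply: mulr_ge0; [exact: n0 | exact: (Ppi_ge0 hP hpi)].
  have -> : n k = - d 0 k by rewrite /n ltr0_norm //; field.
  rewrite {1}E !mxE opprD.
  have -> : gamma * \sum_i n i * Ppi P pi i k =
     gamma * \sum_i n i * Ppi P pi i k + 0 by rewrite addr0.
  rewrite addrC; apply: lerD.
    rewrite -mulrN -sumrN; apply: ler_wpM2l => //; apply: ler_sum => i _.
    rewrite -mulNr; apply: ler_wpM2r; first exact: (Ppi_ge0 hP hpi).
    rewrite /n; have := ler_norm (- d 0 i); rewrite normrN. lra.
  by rewrite oppr_le0; apply: ltW; apply: (proj1 hmu).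
have hS : \sum_j n j <= gamma * \sum_i n i.
  apply: (le_trans (ler_sum _ (fun j _ => hj j))).
  rewrite -mulr_sumr exchange_big /=; apply: ler_wpM2l => //.
  apply: ler_sum => i _; by rewrite -mulr_sumr (Ppi_row hP hpi) mulr1.
have S0 : \sum_j n j = 0.
  apply/eqP; rewrite eq_le sumr_ge0 // andbT.
  have : (1 - gamma) * \sum_j n j <= 0 by rewrite mulrBl mul1r subr_le0.
  rewrite pmulr_rle0 // subr_gt0; by case/andP: hg.
have := psumr_eq0P (fun i _ => n0 i) S0 (i := j) isT.
rewrite /n => /eqP; rewrite mulf_eq0 invr_eq0 pnatr_eq0 orbF subr_eq0 => /eqP h.
by rewrite -h.
Qed.

Lemma occS_gt0 j : 0 < occS gamma P mu pi 0 j.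
Proof.
have E := occS_eq.
have N := occS_ge0.
set d := occS gamma P mu pi in E N *; clearbody d.
have h : 0 <= (d *m Ppi P pi) 0 j.
  rewrite mxE; apply: sumr_ge0 => i _; apply: mulr_ge0; [exact: N|exact: (Ppi_ge0 hP hpi)].
rewrite E !mxE; have := proj1 hmu j; have g0 : 0 <= gamma by case/andP: hg.
have := mulr_ge0 g0 h; rewrite mxE. lra.
Qed.

End Occ.

Section Contr.
Variables (R : realType) (nS nA : nat).
Variables (P : 'I_nS -> 'I_nA -> 'I_nS -> R) (pi : 'M[R]_(nS, nA)) (gamma : R).
Hypothesis hP : is_kernel P.
Hypothesis hpi : is_policy pi.
Hypothesis hg : 0 <= gamma < 1.

Lemma value_fix (Rw : 'M[R]_(nS, nA)) :
  value gamma P pi Rw = Rpi pi Rw + gamma *: (Ppi P pi *m value gamma P pi Rw).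
Proof.
have := mulKVmx (Mm_unit hP hpi hg) (Rpi pi Rw).
rewrite /value -/(Mm P pi gamma) => E.
set V := invmx _ *m _ in E *.
apply/eqP; rewrite -subr_eq scalemxAl -[X in X - _]mul1mx -mulmxBl.
by rewrite /Mm in E; rewrite E.
Qed.

Lemma contr (Tr : 'cV[R]_nS -> 'cV[R]_nS) (r V v0 : 'cV[R]_nS) :
  (forall v, Tr v = r + gamma *: (Ppi P pi *m v)) ->
  V = r + gamma *: (Ppi P pi *m V) ->
  forall n i, `|iter n Tr v0 i 0 - V i 0| <= (\sum_s `|v0 s 0 - V s 0|) * gamma ^+ n.
Proof.
move=> hT hV.
have g0 : 0 <= gamma by case/andP: hg.
elim=> [|n IH] i.
  rewrite expr0 mulr1 /= (bigD1 i) //= lerDl.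
  by apply: sumr_ge0 => j _; exact: normr_ge0.
have E : iter n.+1 Tr v0 - V = gamma *: (Ppi P pi *m (iter n Tr v0 - V)).
  by rewrite iterS hT [in X in _ - X = _]hV opprD addrACA subrr add0r -scalerBr -mulmxBr.
have -> : iter n.+1 Tr v0 i 0 - V i 0 = (iter n.+1 Tr v0 - V) i 0 by rewrite !mxE.
rewrite E mxE mxE normrM (ger0_norm g0) exprS mulrCA.
apply: ler_wpM2l => //.
apply: (le_trans (ler_norm_sum _ _ _)).
have -> : (\sum_s `|v0 s 0 - V s 0|) * gamma ^+ n =
   \sum_j Ppi P pi i j * ((\sum_s `|v0 s 0 - V s 0|) * gamma ^+ n).
  by rewrite -mulr_suml (Ppi_row hP hpi) mul1r.
apply: ler_sum => j _.
rewrite normrM (ger0_norm (Ppi_ge0 hP hpi _ _)); apply: ler_wpM2l.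
  exact: (Ppi_ge0 hP hpi).
have -> : (iter n Tr v0 - V) j 0 = iter n Tr v0 j 0 - V j 0 by rewrite !mxE.
exact: IH.
Qed.
End Contr.


Section Young.
Variable R : realType.

Lemma expR_conv (t X Y : R) : 0 < t < 1 ->
  expR (t * X + (1 - t) * Y) <= t * expR X + (1 - t) * expR Y /\
  (X != Y -> expR (t * X + (1 - t) * Y) < t * expR X + (1 - t) * expR Y).
Proof.
move=> /andP [t0 t1].
set M := t * X + (1 - t) * Y.
have eX : expR X = expR M * expR (X - M) by rewrite -expRD addrC subrK.
have eY : expR Y = expR M * expR (Y - M) by rewrite -expRD addrC subrK.
have hM := expR_gt0 M.
have key : t * expR X + (1 - t) * expR Y - expR M =
   expR M * (t * (expR (X - M) - (1 + (X - M))) + (1 - t) * (expR (Y - M) - (1 + (Y - M)))).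
  rewrite eX eY /M; ring.
have hx := expR_ge1Dx (X - M).
have hy := expR_ge1Dx (Y - M).
split.
  rewrite -subr_ge0 key; apply: mulr_ge0; first exact: ltW.
  apply: addr_ge0; apply: mulr_ge0; rewrite ?subr_ge0 //; [exact: ltW | lra].
move=> XY.
have XM : X - M != 0.
  have -> : X - M = (1 - t) * (X - Y) by rewrite /M; ring.
  apply: mulf_neq0; last by rewrite subr_eq0.
  by apply/eqP => h; move: t1; rewrite -subr_gt0 h ltxx.
have hx' := expR_gt1Dx XM.
rewrite -subr_gt0 key; apply: mulr_gt0 => //.
apply: ltr_pwDl.
  by apply: mulr_gt0 => //; rewrite subr_gt0.
by apply: mulr_ge0; rewrite ?subr_ge0 //; lra.
Qed.

Lemma young (p q a b : R) : 1 < p -> 1 < q -> p^-1 + q^-1 = 1 -> 0 <= a -> 0 <= b ->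
  a * b <= a `^ p / p + b `^ q / q /\
  (a * b = a `^ p / p + b `^ q / q -> a `^ p = b `^ q).
Proof.
move=> p1 q1 pq a0 b0.
have p0 : 0 < p by lra.
have q0 : 0 < q by lra.
have hq : q^-1 = 1 - p^-1 by rewrite -pq; ring.
have [->|anz] := eqVneq a 0.
  rewrite mul0r powR0 ?gt_eqF // mul0r add0r; split.
    by apply: divr_ge0; [exact: powR_ge0 | exact: ltW].
  move/esym/eqP; rewrite mulf_eq0 invr_eq0 (gt_eqF q0) orbF => /eqP ->; done.
have [->|bnz] := eqVneq b 0.
  rewrite mulr0 powR0 ?gt_eqF // mul0r addr0; split.
    by apply: divr_ge0; [exact: powR_ge0 | exact: ltW].
  by move/esym/eqP; rewrite mulf_eq0 invr_eq0 (gt_eqF p0) orbF => /eqP ->.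
have apos : 0 < a by rewrite lt_neqAle eq_sym anz.
have bpos : 0 < b by rewrite lt_neqAle eq_sym bnz.
have ea : a `^ p = expR (p * ln a) by rewrite /powR (negPf anz).
have eb : b `^ q = expR (q * ln b) by rewrite /powR (negPf bnz).
have eab : a * b = expR (p^-1 * (p * ln a) + (1 - p^-1) * (q * ln b)).
  rewrite -hq !mulrA !mulVf ?gt_eqF // !mul1r expRD !lnK //.
have t01 : 0 < p^-1 < 1 by rewrite invr_gt0 p0 /= invf_lt1.
have [H1 H2] := expR_conv (p * ln a) (q * ln b) t01.
have E0 : p^-1 * (p * ln a) + q^-1 * (q * ln b) = ln (a * b).
  by rewrite lnM ?posrE // !mulrA !mulVf ?gt_eqF // !mul1r.
rewrite -hq E0 lnK ?posrE ?mulr_gt0 // -ea -eb in H1 H2.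
rewrite (mulrC (p^-1)) (mulrC (q^-1)) in H1 H2.
split => //.
move=> E; apply/eqP; apply/negPn/negP => ne.
have : (p * ln a) != (q * ln b) by apply: contra ne; rewrite ea eb => /eqP ->.
move/H2; rewrite E ltxx //.
Qed.

End Young.

Section PowH.
Variable R : realType.
Lemma powR_div (x y r : R) : 0 <= x -> 0 < y -> (x / y) `^ r = x `^ r / y `^ r.
Proof.
move=> x0 y0; rewrite powRM //; last by rewrite invr_ge0 ltW.
by rewrite -powR_inv1 ?ltW // -powRrM mulN1r powRN.
Qed.
Lemma powR_pK (x r : R) : 0 <= x -> r != 0 -> (x `^ r) `^ r^-1 = x.
Proof. by move=> x0 r0; rewrite -powRrM mulfV // powRr1. Qed.
Lemma powR_Kp (x r : R) : 0 <= x -> r != 0 -> (x `^ r^-1) `^ r = x.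
Proof. by move=> x0 r0; rewrite -powRrM mulVf // powRr1. Qed.
End PowH.

Section QF.
Variable R : realType.
Lemma q_gt1 (p : R) : 1 < p -> 1 < p / (p - 1).
Proof. move=> hp; rewrite ltr_pdivlMr ?subr_gt0 // mul1r; lra. Qed.
Lemma pq_inv (p : R) : 1 < p -> p^-1 + (p / (p - 1))^-1 = 1.
Proof. move=> hp; rewrite invf_div; field; rewrite gt_eqF //; lra. Qed.
Lemma qp_mul (p : R) : 1 < p -> (p / (p - 1) - 1) * p = p / (p - 1).
Proof. move=> hp; field; rewrite subr_eq0; apply/eqP => h; move: hp; rewrite h; lra. Qed.
End QF.

Section Gap.
Variable R : realType.
Lemma gap (p q u b : R) : 1 < p -> 1 < q -> p^-1 + q^-1 = 1 -> (q - 1) * p = q ->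
  0 <= b ->
  0 <= `|u| `^ p / p + b `^ q / q - u * b /\
  (`|u| `^ p / p + b `^ q / q - u * b = 0 -> u = b `^ (q - 1)).
Proof.
move=> p1 q1 pq qp b0.
have [Y1 Y2] := young p1 q1 pq (normr_ge0 u) b0.
have ub : u * b <= `|u| * b by apply: ler_wpM2r => //; exact: ler_norm.
split; first by rewrite subr_ge0; exact: le_trans ub Y1.
move=> /eqP; rewrite subr_eq0 => /eqP E.
have E1 : `|u| * b = `|u| `^ p / p + b `^ q / q.
  by apply/eqP; rewrite eq_le Y1 /= E ub.
have E2 : `|u| * b = u * b by apply/eqP; rewrite eq_le ub E1 E lexx.
have E3 := Y2 E1.
have q10 : q - 1 != 0 by rewrite subr_eq0; apply/eqP => h; move: q1; rewrite h ltxx.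
have p0 : 0 < p by apply: lt_trans ltr01 p1.
have [bz|bpos] := eqVneq b 0.
  move: E3; rewrite bz powR0; last by apply/eqP => h; move: q1; rewrite h ltr10.
  move/powR_eq0_eq0/eqP; rewrite normr_eq0 => /eqP ->.
  by rewrite powR0.
have bp : 0 < b by rewrite lt_neqAle eq_sym bpos b0.
have uu : `|u| = u by apply: (mulIf bpos).
have u0 : 0 <= u by rewrite -uu normr_ge0.
have I := powR_injective p0.
apply: I; first by rewrite nnegrE.
  by rewrite nnegrE powR_ge0.
by rewrite /= -powRrM qp -E3 uu.
Qed.
End Gap.


Lemma mx_subE (R : realType) m n (A B : 'M[R]_(m, n)) c i j :
  (A - c *: B - A) i j = - (c * B i j).
Proof. rewrite !mxE; ring. Qed.
Lemma mx_subE' (R : realType) m n (A B : 'M[R]_(m, n)) c i j :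
  (A - c *: B) i j - A i j = - (c * B i j).
Proof. rewrite !mxE; ring. Qed.

Lemma alg1 (R : realType) (D x y c : R) : D * x * (- (c * y)) = - (c * D) * (x * y).
Proof. ring. Qed.

Lemma mx_sub2E (R : realType) m n (A B : 'M[R]_(m, n)) c i j :
  (A - c *: B) i j = A i j - c * B i j.
Proof. rewrite !mxE; ring. Qed.
Lemma mx_sub3E (R : realType) m n (A B : 'M[R]_(m, n)) i j :
  (A - B) i j = A i j - B i j.
Proof. by rewrite !mxE. Qed.

Lemma sum3 (R : realType) m n (A B C : 'I_m -> 'I_n -> R) :
  \sum_s \sum_a (A s a + B s a - C s a) =
  \sum_s \sum_a A s a + \sum_s \sum_a B s a - \sum_s \sum_a C s a.
Proof.
rewrite -big_split -sumrB; apply: eq_bigr => s _.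
by rewrite -big_split -sumrB.
Qed.

Lemma fin_ineq (R : realType) (p q SA SB SC : R) : 0 < p -> 0 < q -> p^-1 + q^-1 = 1 ->
  SA <= 1 -> SB = 1 -> 1 <= SC -> SA / p + SB / q - SC <= 0.
Proof.
move=> p0 q0 pq hA -> hC.
have : SA / p <= p^-1 by rewrite ler_pdivrMr // mulVf ?gt_eqF // ?mul1r.
move: pq; lra.
Qed.

Lemma alg2 (R : realType) (x y c D : R) : (- x / c) * (y / D) = - (y * x) * (c^-1 * D^-1).
Proof. ring. Qed.

Lemma alg3 (R : realType) (x c u : R) : c != 0 -> u = - x / c -> x = - (c * u).
Proof. move=> c0 ->; field. exact: c0. Qed.

Lemma RpiE (R : realType) m n (pi Rw : 'M[R]_(m, n)) i :
  Rpi pi Rw i 0 = \sum_a pi i a * Rw i a.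
Proof. by rewrite mxE. Qed.
Lemma colE (R : realType) m (f : 'I_m -> R) i : (\col_s f s) i 0 = f i.
Proof. by rewrite mxE. Qed.
Lemma alg4 (R : realType) (c x y N : R) : c * (x * y) / N = x * (c * (y / N)).
Proof. ring. Qed.

Section Worst.
Variables (R : realType) (nS nA : nat).
Variables (P : 'I_nS -> 'I_nA -> 'I_nS -> R) (gamma : R) (mu : 'rV[R]_nS).
Variables (p alpha : R) (R0 pi Rstar : 'M[R]_(nS, nA)) (s0 : 'I_nS).
Hypothesis hP : is_kernel P.
Hypothesis hg : 0 <= gamma < 1.
Hypothesis hmu : is_init_dist mu.
Hypothesis hp : 1 < p.
Hypothesis ha : 0 < alpha.
Hypothesis hpi : is_policy pi.
Hypothesis hw : worst_reward gamma P mu pi p alpha R0 Rstar.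

Let q := p / (p - 1).
Let d := occ gamma P mu pi.
Let D := Lnorm q d.
Definition Wm := \matrix_(s, a) (powR (d s a) (q - 1) / powR D (q - 1)).

Let p0 : 0 < p. Proof. exact: lt_trans ltr01 hp. Qed.
Let q1 : 1 < q.
Proof. exact: q_gt1. Qed.
Let q0 : 0 < q. Proof. exact: lt_trans ltr01 q1. Qed.
Let pq : p^-1 + q^-1 = 1.
Proof. exact: pq_inv. Qed.
Let qp : (q - 1) * p = q.
Proof. exact: qp_mul. Qed.

Let d_ge0 s a : 0 <= d s a.
Proof.
rewrite /d /occ mxE; apply: mulr_ge0; first exact: occS_ge0.
exact: (proj1 hpi).
Qed.

Let SQ := \sum_s \sum_a powR (d s a) q.

Let D_E : D = powR SQ q^-1.
Proof.
rewrite /D /Lnorm /SQ; congr (powR _ _); apply: eq_bigr => s _; apply: eq_bigr => a _.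
by rewrite ger0_norm.
Qed.

Let SQ_gt0 : 0 < SQ.
Proof.
have S0 : 0 <= SQ by apply: sumr_ge0 => s _; apply: sumr_ge0 => a _; exact: powR_ge0.
rewrite lt_neqAle S0 andbT; apply/eqP => /esym H.
have H1 := psumr_eq0P (fun s _ => sumr_ge0 _ (fun a _ => powR_ge0 (d s a) q)) H (i := s0) isT.
have H2 a := psumr_eq0P (fun a _ => powR_ge0 (d s0 a) q) H1 (i := a) isT.
have : \sum_a pi s0 a = 0.
  apply: big1 => a _; have := powR_eq0_eq0 (H2 a).
  rewrite /d /occ mxE => /eqP; rewrite mulf_eq0 => /orP [|/eqP //].
  move=> /eqP h; exfalso; move: (occS_gt0 hP hpi hg hmu s0); rewrite h ltxx //.
by rewrite (proj2 hpi) => /eqP; rewrite oner_eq0.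
Qed.

Let D_gt0 : 0 < D.
Proof. by rewrite D_E powR_gt0. Qed.

Let DqE : powR D q = SQ.
Proof. rewrite D_E. rewrite (powR_Kp (ltW SQ_gt0) (negbT (gt_eqF q0))). done. Qed.

Let delta s a := d s a / D.
Let delta_ge0 s a : 0 <= delta s a.
Proof. apply: divr_ge0; [exact: d_ge0 | exact: ltW D_gt0]. Qed.

Let sum_deltaq : \sum_s \sum_a powR (delta s a) q = 1.
Proof.
under eq_bigr do under eq_bigr do rewrite /delta (powR_div _ (d_ge0 _ _) D_gt0).
rewrite DqE; under eq_bigr do rewrite -mulr_suml.
rewrite -mulr_suml mulfV; first by []. exact: negbT (gt_eqF SQ_gt0).
Qed.

Let W_delta s a : Wm s a = powR (delta s a) (q - 1).
Proof. by rewrite mxE /delta (powR_div _ (d_ge0 _ _) D_gt0). Qed.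

Let Rp := R0 - alpha *: Wm.

Let Rp_ball : in_ball p alpha R0 Rp.
Proof.
rewrite /in_ball /Lnorm.
have E : forall s a, `|(Rp - R0) s a| `^ p = alpha `^ p * delta s a `^ q.
  move=> s a; rewrite /Rp mx_subE.
  rewrite normrN ger0_norm; last by apply: mulr_ge0; [exact: ltW ha | rewrite W_delta; exact: powR_ge0].
  rewrite powRM; [|exact: ltW ha| by rewrite W_delta; exact: powR_ge0].
  by rewrite W_delta -powRrM qp.
under eq_bigr do under eq_bigr do rewrite E.
under eq_bigr do rewrite -mulr_sumr.
rewrite -mulr_sumr sum_deltaq mulr1 powR_pK; first exact: lexx.
  exact: ltW ha.
exact: negbT (gt_eqF p0).
Qed.

Let retE (Rw : 'M[R]_(nS, nA)) : ret gamma P mu pi Rw - ret gamma P mu pi R0 =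
  \sum_s \sum_a d s a * (Rw s a - R0 s a).
Proof.
rewrite /ret -sumrB; apply: eq_bigr => s _; rewrite -sumrB; apply: eq_bigr => a _.
by rewrite mulrBr.
Qed.

Let ret_Rp : ret gamma P mu pi Rp - ret gamma P mu pi R0 = - (alpha * D).
Proof.
rewrite retE.
have E : forall s a, d s a * (Rp s a - R0 s a) = - (alpha * D) * delta s a `^ q.
  move=> s a; rewrite /Rp mx_subE' W_delta.
  have -> : d s a = D * delta s a by rewrite /delta mulrC divfK; [by [] | exact: negbT (gt_eqF D_gt0)].
  rewrite -(mulr_powRB1 (delta_ge0 s a) q0); exact: alg1.
under eq_bigr do under eq_bigr do rewrite E.
under eq_bigr do rewrite -mulr_sumr.
by rewrite -mulr_sumr sum_deltaq mulr1.
Qed.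

Lemma Rstar_eq s a : Rstar s a = R0 s a - alpha * Wm s a.
Proof.
have [hin hmin] := hw.
pose X s a := Rstar s a - R0 s a.
pose S := \sum_s \sum_a `|X s a| `^ p.
have hS : S <= alpha `^ p.
  move: hin; rewrite /in_ball /Lnorm.
  under eq_bigr do under eq_bigr do rewrite mx_sub3E.
  move=> hin.
  have S0 : 0 <= S by apply: sumr_ge0 => i _; apply: sumr_ge0 => j _; exact: powR_ge0.
  have := ge0_ler_powR (ltW p0) _ _ hin.
  rewrite !nnegrE powR_ge0 (ltW ha) => /(_ isT isT).
  by rewrite powR_Kp; [exact: id | exact: S0 | exact: negbT (gt_eqF p0)].
have hret : \sum_s \sum_a d s a * X s a <= - (alpha * D).
  rewrite -ret_Rp -retE.
  by rewrite lerD2r; apply: hmin; exact: Rp_ball.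
pose u s a := - X s a / alpha.
pose G s a := `|u s a| `^ p / p + delta s a `^ q / q - u s a * delta s a.
have hG s' a' : 0 <= G s' a' /\ (G s' a' = 0 -> u s' a' = delta s' a' `^ (q - 1)).
  exact: gap hp q1 pq qp (delta_ge0 s' a').
have SA : \sum_s \sum_a `|u s a| `^ p <= 1.
  have E : forall s a, `|u s a| `^ p = `|X s a| `^ p / alpha `^ p.
    move=> i j; rewrite /u normrM normrN normfV (gtr0_norm ha).
    by rewrite (powR_div _ (normr_ge0 _) ha).
  under eq_bigr do under eq_bigr do rewrite E.
  under eq_bigr do rewrite -mulr_suml.
  rewrite -mulr_suml -/S ler_pdivrMr; [by rewrite mul1r | exact: powR_gt0 ha].
have SC : 1 <= \sum_s \sum_a u s a * delta s a.
  have E : forall s a, u s a * delta s a = - (d s a * X s a) * (alpha^-1 * D^-1).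
    by move=> i j; rewrite /u /delta alg2.
  under eq_bigr do under eq_bigr do rewrite E.
  under eq_bigr do rewrite -mulr_suml sumrN.
  rewrite -mulr_suml sumrN -invfM ler_pdivlMr; last exact: mulr_gt0 ha D_gt0.
  by rewrite mul1r lerNr.
have SG : \sum_s \sum_a G s a = 0.
  apply/eqP; rewrite eq_le; apply/andP; split; last first.
    by apply: sumr_ge0 => i _; apply: sumr_ge0 => j _; exact: (proj1 (hG i j)).
  rewrite /G sum3.
  under eq_bigr do rewrite -mulr_suml.
  rewrite -mulr_suml.
  under [X in _ + X - _ <= _]eq_bigr do rewrite -mulr_suml.
  rewrite -mulr_suml.
  exact: fin_ineq p0 q0 pq SA sum_deltaq SC.
have H1 := psumr_eq0P (fun i _ => sumr_ge0 _ (fun j _ => proj1 (hG i j))) SG (i := s) isT.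
have H2 := psumr_eq0P (fun j _ => proj1 (hG s j)) H1 (i := a) isT.
have Hu := proj2 (hG s a) H2.
have HX : X s a = - (alpha * u s a).
  apply: alg3; [exact: negbT (gt_eqF ha) | by []].
move: HX; rewrite Hu -W_delta /X => HX.
by rewrite -HX addrC subrK.
Qed.

Lemma WmE s a : Wm s a = powR (d s a) (q - 1) / powR D (q - 1).
Proof. by rewrite mxE. Qed.

Lemma TregE v : Treg gamma P mu pi p alpha R0 v = Rpi pi Rstar + gamma *: (Ppi P pi *m v).
Proof.
rewrite /Treg /bellman; cbv zeta.
rewrite addrAC; congr (_ + _).
apply/colP => i; rewrite mx_sub3E !RpiE colE.
under [RHS]eq_bigr do rewrite Rstar_eq WmE mulrBr.
rewrite sumrB; congr (_ - _).
rewrite mulr_sumr mulr_suml; apply: eq_bigr => a _; exact: alg4.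
Qed.

End Worst.

End Helpers.
Import Helpers.
Unset Implicit Arguments.
Set Strict Implicit.

Theorem theorem2 (R : realType) (nS nA : nat)
  (P : 'I_nS -> 'I_nA -> 'I_nS -> R) (gamma : R) (mu : 'rV[R]_nS)
  (p alpha : R) (R0 : 'M[R]_(nS, nA)) (pi : 'M[R]_(nS, nA))
  (Rstar : 'M[R]_(nS, nA)) (v0 : 'cV[R]_nS) :
  is_kernel P -> 0 <= gamma < 1 -> is_init_dist mu ->
  1 < p -> 0 < alpha -> is_policy pi ->
  worst_reward gamma P mu pi p alpha R0 Rstar ->
  converges_linearly
    (fun n => iter n (Treg gamma P mu pi p alpha R0) v0)
    (value gamma P pi Rstar).
Proof.
move=> hP hg hmu hp ha hpi hw.
exists (\sum_s `|v0 s 0 - value gamma P pi Rstar s 0|), gamma.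
split; first by apply: sumr_ge0 => s _; exact: normr_ge0.
split; first exact: hg.
move=> n s.
exact: (contr hP hpi hg v0 (TregE s hP hg hmu hp ha hpi hw) (value_fix hP hpi hg Rstar)).
Qed.
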